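(* Let $\mu$ be a probability measure on $\mathbb{R}$ with finite support $V$ and let $c:V\to\mathbb{R}$ satisfy $c(v)\le v$ for all $v\in V$. Then there exist incentive compatible distributions $\nu_1,\dots,\nu_J$ and weights $(q_1,\dots,q_J)\in\Delta(\{1,\dots,J\})$ such that $\sum_j q_j\nu_j=\mu$ and $\sigma^*(c,\mu)\subset\sigma^*(c,\nu_j)$ for every $j$.
   Context: For a finitely supported probability $\nu$ on $V$ and $p\in\mathbb{R}$, $\pi(c,\nu,p)=\sum_{v\in\mathrm{Supp}(\nu),\,v\ge p}(p-c(v))\nu(\{v\})$ and $\sigma^*(c,\nu)=\arg\max_{p\in\mathbb{R}}\pi(c,\nu,p)$. A distribution $\nu$ on $V$ is an incentive compatible distribution (ICD) if $\pi(c,\nu,p)$ is the same nonnegative constant for all $p\in\mathrm{Supp}(\nu)$. *)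

(* Defs.v *)
From HB Require Import structures.
From mathcomp Require Import all_boot all_order all_algebra.
From mathcomp Require Import reals.
Set Implicit Arguments. Unset Strict Implicit. Unset Printing Implicit Defensive.
Import Order.TTheory GRing.Theory Num.Theory.
Local Open Scope ring_scope.

(* A finitely supported distribution is represented by its mass function
   nu : R -> R, nu v = nu({v}).  [V] is a finite (duplicate-free) list of reals. *)

Definition is_dist_on (R : realType) (V : seq R) (nu : R -> R) : Prop :=
  (forall v, 0 <= nu v) /\ (forall v, v \notin V -> nu v = 0) /\
  \sum_(v <- V) nu v = 1.

Definition supp (R : realType) (V : seq R) (nu : R -> R) (v : R) : bool :=
  (v \in V) && (0 < nu v).

Definition profit (R : realType) (V : seq R) (c : R -> R) (nu : R -> R) (p : R) : R :=
  \sum_(v <- V | supp V nu v && (p <= v)) (p - c v) * nu v.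

Definition sigma_star (R : realType) (V : seq R) (c : R -> R) (nu : R -> R) (p : R) : Prop :=
  forall p' : R, profit V c nu p' <= profit V c nu p.

Definition is_ICD (R : realType) (V : seq R) (c : R -> R) (nu : R -> R) : Prop :=
  is_dist_on V nu /\
  exists k : R, 0 <= k /\ forall p, supp V nu p -> profit V c nu p = k.

(* Main.v *)
Require Import Defs.
From HB Require Import structures.
From mathcomp Require Import all_boot all_order all_algebra.
From mathcomp Require Import reals.
From mathcomp Require Import ring lra.
Import Order.TTheory GRing.Theory Num.Theory.
Local Open Scope ring_scope.

Lemma argmin_pred {R : realType} (T : eqType) (P : pred T) (f : T -> R) (l : seq T) :
  has P l -> exists x, [/\ x \in l, P x & forall y, y \in l -> P y -> f x <= f y].
Proof.
elim: l => [//|a l IH] /=.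
case Hl: (has P l).
  move=> _; have [x [xl Px Hx]] := IH Hl.
  case Ha: (P a && (f a < f x)).
    move/andP: Ha => [Pa lt]; exists a; split => //; first by rewrite inE eqxx.
    move=> y; rewrite inE => /orP [/eqP -> //|yl Py].
    by apply: (le_trans (ltW lt)); apply: Hx.
  exists x; split => //; first by rewrite inE xl orbT.
  move=> y; rewrite inE => /orP [/eqP -> Py|yl Py]; last exact: Hx.
  by move: Ha; rewrite Py /= => /negbT; rewrite -leNgt.
rewrite orbF => Pa; exists a; split => //; first by rewrite inE eqxx.
move=> y; rewrite inE => /orP [/eqP -> //|yl Py].
by move/negbT/hasPn: Hl => /(_ y yl); rewrite Py.
Qed.

Lemma path_lt_min {R : realType} (w : R) s : path <%R w s -> forall x, x \in s -> w < x.
Proof. by move=> /(order_path_min (@lt_trans _ _)) /allP. Qed.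
Arguments path_lt_min {R w s}.

Lemma path_belast_lt {R : realType} (w : R) s :
  path <%R w s -> forall x, x \in belast w s -> x < last w s.
Proof.
elim: s w => [|a s IH] w /=; first by move=> _ x; rewrite ?inE ?in_nil.
move=> /andP [wa pa] x; rewrite inE => /orP [/eqP ->|xs]; last exact: IH.
case: s {IH} pa => [|b s] pa /=; first by [].
exact: lt_trans wa (path_lt_min pa _ (mem_last b s)).
Qed.
Arguments path_belast_lt {R w s}.

Lemma path_le_last {R : realType} (w : R) s :
  path <%R w s -> forall x, x \in w :: s -> x <= last w s.
Proof.
move=> ps x; rewrite lastI mem_rcons inE => /orP [/eqP -> //|xb].
exact: ltW (path_belast_lt ps _ xb).
Qed.

Lemma count_le_in (T : eqType) (a1 a2 : pred T) s :
  (forall y, y \in s -> a1 y -> a2 y) -> (count a1 s <= count a2 s)%N.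
Proof.
elim: s => [//|y s IH] H /=; apply: leq_add.
  by case: (boolP (a1 y)) => // /(H y (mem_head _ _)) ->.
by apply: IH => z zs; apply: H; rewrite inE zs orbT.
Qed.

Lemma count_lt_in (T : eqType) (a1 a2 : pred T) s x :
  (forall y, y \in s -> a1 y -> a2 y) -> x \in s -> a2 x -> ~~ a1 x ->
  (count a1 s < count a2 s)%N.
Proof.
elim: s => [//|y s IH] H; rewrite inE => /orP [/eqP ->|xs] a2x na1x /=.
  rewrite (negbTE na1x) a2x add0n add1n ltnS; apply: count_le_in.
  by move=> z zs; apply: H; rewrite inE zs orbT.
rewrite -addnS; apply: leq_add.
  by case: (boolP (a1 y)) => // /(H y (mem_head _ _)) ->.
by apply: IH => // z zs; apply: H; rewrite inE zs orbT.
Qed.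

Fixpoint icdf {R : realType} (c : R -> R) (k : R) (s : seq R) : R -> R :=
  match s with
  | [::] => fun _ => 0
  | w :: s' =>
    if s' is [::] then (fun x => if x == w then 1 else 0)
    else (fun x => if x == w then
                     (k - \sum_(v <- s') (w - c v) * icdf c k s' v) / (w - c w)
                   else icdf c k s' x)
  end.

Lemma icdf_cons2 (R : realType) (c : R -> R) k w w' s :
  icdf c k (w :: w' :: s) = (fun x => if x == w then
     (k - \sum_(v <- w' :: s) (w - c v) * icdf c k (w' :: s) v) / (w - c w)
     else icdf c k (w' :: s) x).
Proof. by []. Qed.

Lemma icd_prop (R : realType) (c : R -> R) (k : R) (s : seq R) (w : R) :
  path <%R w s -> (forall x, x \in belast w s -> c x < x) ->
  k = last w s - c (last w s) ->
  [/\ forall x, x \in w :: s -> 0 < icdf c k (w :: s) x,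
      forall x, x \notin w :: s -> icdf c k (w :: s) x = 0 &
      forall x, x \in w :: s ->
        \sum_(v <- w :: s | x <= v) (x - c v) * icdf c k (w :: s) v = k].
Proof.
elim: s w => [|w' s IH] w.
  move=> _ _ ->; split.
  - by move=> x; rewrite inE => /eqP -> /=; rewrite eqxx.
  - by move=> x; rewrite inE /= => /negbTE ->.
  - move=> x; rewrite inE => /eqP ->.
    by rewrite big_cons big_nil lexx /= eqxx mulr1 addr0.
move=> /andP [ww' pw'] Hb Hk.
have Hb' : forall x, x \in belast w' s -> c x < x.
  by move=> x xb; apply: Hb; rewrite inE xb orbT.
have [Hpos Hzero Hsum] := IH w' pw' Hb' Hk.
have cw : c w < w by apply: Hb; rewrite inE eqxx.
rewrite icdf_cons2.
set f := icdf c k (w' :: s).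
have wlt : forall v, v \in w' :: s -> w < v.
  move=> v; rewrite inE => /orP [/eqP -> //|vs].
  exact: lt_trans ww' (path_lt_min pw' _ vs).
have w'le : forall v, v \in w' :: s -> w' <= v.
  move=> v; rewrite inE => /orP [/eqP -> //|vs].
  exact: ltW (path_lt_min pw' _ vs).
have Hk' : \sum_(v <- w' :: s) (w' - c v) * f v = k.
  rewrite -(Hsum w' (mem_head _ _)) [RHS]big_seq_cond [LHS]big_seq.
  apply: eq_bigl => v; case vin: (v \in w' :: s) => //=.
  by rewrite w'le.
have Fpos : 0 < \sum_(v <- w' :: s) f v.
  rewrite big_cons; apply: ltr_wpDr; last exact: Hpos (mem_head _ _).
  rewrite big_seq; apply: sumr_ge0 => v vs; apply: ltW; apply: Hpos.
  by rewrite inE vs orbT.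
set X := \sum_(v <- w' :: s) (w - c v) * f v.
have HX : X = k - (w' - w) * \sum_(v <- w' :: s) f v.
  rewrite /X -Hk' mulr_sumr -sumrB; apply: eq_bigr => v _; ring.
have Xk : X < k.
  rewrite HX; have : 0 < (w' - w) * \sum_(v <- w' :: s) f v.
    by apply: mulr_gt0 => //; rewrite subr_gt0.
  lra.
have nE : forall v, v \in w' :: s -> (if v == w then
     (k - X) / (w - c w) else f v) = f v.
  by move=> v /wlt; rewrite lt_def eq_sym => /andP [/negbTE -> _].
split.
- move=> x; rewrite inE; case: eqP => [-> _|_ /= xs]; last exact: Hpos.
  by apply: divr_gt0; rewrite subr_gt0.
- move=> x; rewrite inE negb_or => /andP [/negbTE -> xs]; exact: Hzero.
- move=> x; rewrite inE => /orP [/eqP ->|xs].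
    rewrite big_cons lexx eqxx.
    have -> : \sum_(j <- w' :: s | w <= j) (w - c j) *
         (if j == w then (k - X) / (w - c w) else f j) = X.
      rewrite big_seq_cond /X [RHS]big_seq; apply: eq_big.
        by move=> v; case vin: (v \in w' :: s) => //=; rewrite ltW ?wlt.
      by move=> v /andP [vin _]; rewrite nE.
    have : w - c w != 0 by rewrite subr_eq0 gt_eqF.
    move=> ne; field; exact: ne.
  rewrite big_cons.
  have -> : (x <= w) = false by apply/negbTE; rewrite -ltNge; apply: wlt.
  rewrite big_seq_cond (eq_bigr (fun v => (x - c v) * f v)).
    by rewrite -big_seq_cond; exact: Hsum x xs.
  by move=> v /andP [vin _]; rewrite nE.
Qed.

Definition Pf {R : realType} (V : seq R) (c : R -> R) (m : R -> R) (p : R) : R :=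
  \sum_(v <- V | p <= v) (p - c v) * m v.

Lemma nonpos0 {R : realType} (m : R -> R) v : (forall v, 0 <= m v) -> ~~ (0 < m v) -> m v = 0.
Proof. by move=> Hm; rewrite -leNgt => mv; apply/le_anti; rewrite mv Hm. Qed.
Arguments nonpos0 {R m v}.

Lemma profitE {R : realType} (V : seq R) c (m : R -> R) p : (forall v, 0 <= m v) ->
  profit V c m p = Pf V c m p.
Proof.
move=> Hm; rewrite /profit /Pf /supp big_mkcond [RHS]big_mkcond.
apply: eq_big_seq => v vV; rewrite vV /=.
case: (boolP (0 < m v)) => //= mv; rewrite (nonpos0 Hm mv) mulr0.
by case: ifP.
Qed.

Lemma sigma_starE {R : realType} (V : seq R) c (m : R -> R) p : (forall v, 0 <= m v) ->
  sigma_star V c m p <-> forall p', Pf V c m p' <= Pf V c m p.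
Proof.
move=> Hm; rewrite /sigma_star; split => H p'.
  by rewrite -!profitE.
by rewrite !profitE.
Qed.

Lemma Pf_dom {R : realType} (V : seq R) c (m : R -> R) p : (forall v, 0 <= m v) ->
  Pf V c m p = 0 \/ exists w, [/\ w \in V, 0 < m w & Pf V c m p <= Pf V c m w].
Proof.
move=> Hm.
case H: (has (fun v => (p <= v) && (0 < m v)) V).
  right; have [w [wV /andP [pw mw] Hmin]] := @argmin_pred R R _ (fun x : R => x) _ H.
  exists w; split => //.
  rewrite /Pf big_mkcond [X in _ <= X]big_mkcond /= big_seq [X in _ <= X]big_seq.
  apply: ler_sum => v vV.
  case: (boolP (w <= v)) => wv.
    rewrite (le_trans pw wv); apply: ler_wpM2r; first exact: Hm.
    by rewrite lerB.
  case: (boolP (p <= v)) => pv //.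
  case: (boolP (0 < m v)) => mv.
    by have := Hmin v vV; rewrite pv mv => /(_ isT) wv'; rewrite wv' in wv.
  by rewrite (nonpos0 Hm mv) mulr0.
left; rewrite /Pf big_seq_cond; apply: big1 => v /andP [vV pv].
have : ~~ (0 < m v).
  by apply/negP => mv; move/negbT/hasPn: H => /(_ v vV); rewrite pv mv.
by move=> mv; rewrite (nonpos0 Hm mv) mulr0.
Qed.

Lemma Pf_max {R : realType} (V : seq R) c (m : R -> R) : (forall v, 0 <= m v) ->
  (forall v, v \in V -> c v <= v) -> has (fun v => 0 < m v) V ->
  exists w, [/\ w \in V, 0 < m w & 0 <= Pf V c m w].
Proof.
move=> Hm Hc H; have [w [wV mw Hmax]] := @argmin_pred R R _ (fun x : R => - x) _ H.
exists w; split => //; rewrite /Pf big_seq_cond; apply: sumr_ge0 => v /andP [vV wv].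
case: (eqVneq v w) => [->|ne].
  by apply: mulr_ge0; [rewrite subr_ge0; exact: Hc|exact: Hm].
case: (boolP (0 < m v)) => mv.
  have := Hmax v vV mv; rewrite lerN2 => vw.
  have vw' : v = w by apply/le_anti; rewrite vw wv.
  by rewrite vw' eqxx in ne.
by rewrite (nonpos0 Hm mv) mulr0.
Qed.

Lemma Pf_opt {R : realType} (V : seq R) c (m : R -> R) q : (forall v, 0 <= m v) ->
  (forall v, v \in V -> c v <= v) ->
  (forall w, w \in V -> 0 < m w -> Pf V c m w <= Pf V c m q) ->
  forall p, Pf V c m p <= Pf V c m q.
Proof.
move=> Hm Hc H p.
case: (Pf_dom V c m p Hm) => [->|[w [wV mw le]]]; last exact: le_trans le (H w wV mw).
case: (Pf_dom V c m q Hm) => [->//|[w [wV mw _]]].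
have Hh : has (fun v => 0 < m v) V by apply/hasP; exists w.
have [w0 [w0V mw0 ge]] := Pf_max V c m Hm Hc Hh.
exact: le_trans ge (H w0 w0V mw0).
Qed.

Lemma Pf_lin {R : realType} (V : seq R) c m nu t p :
  Pf V c (fun v => m v - t * nu v) p = Pf V c m p - t * Pf V c nu p.
Proof. by rewrite /Pf mulr_sumr -sumrB; apply: eq_bigr => v _; ring. Qed.

Lemma step {R : realType} (V : seq R) (c m : R -> R) :
  uniq V -> (forall v, v \in V -> c v <= v) ->
  (forall v, 0 <= m v) -> (forall v, v \notin V -> m v = 0) ->
  has (fun v => 0 < m v) V ->
  exists (nu : R -> R) (t : R),
    [/\ 0 < t, is_ICD V c nu, (forall v, 0 <= m v - t * nu v),
     (count (fun v => (0 < m v - t * nu v)%R) V < count (fun v => (0 < m v)%R) V)%N &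
     (forall p, sigma_star V c m p ->
        sigma_star V c nu p /\ sigma_star V c (fun v => m v - t * nu v) p)].
Proof.
move=> HV Hc Hm H0 Hhas.
pose Q := fun w => (0 < m w) && all (fun u => ((0 < m u) && (u < w)) ==> (c u < u)) V.
pose ss := sort <=%R (filter Q V).
have mem_ss : forall x, (x \in ss) = (x \in V) && Q x.
  by move=> x; rewrite mem_sort mem_filter andbC.
have sort_ss : sorted <%R ss by rewrite sort_lt_sorted filter_uniq.
have sum_ss : forall g : R -> R, (forall x, x \notin ss -> g x = 0) ->
    \sum_(v <- V) g v = \sum_(v <- ss) g v.
  move=> g Hg; rewrite [RHS](perm_big (filter Q V)); last by rewrite /ss perm_sort.
  rewrite big_filter [RHS]big_mkcond.
  apply: eq_big_seq => v vV; case: ifP => // Qv; apply: Hg.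
  by rewrite mem_ss vV Qv.
have [wm [wmV mwm Hwm]] := @argmin_pred R R _ (fun x : R => x) _ Hhas.
have Qwm : Q wm.
  rewrite /Q mwm /=; apply/allP => u uV; apply/implyP => /andP [mu ltu].
  by have := Hwm u uV mu; rewrite leNgt ltu.
case Ess: ss => [|w s'].
  by have := mem_ss wm; rewrite Ess wmV Qwm.
have pws : path <%R w s' by move: sort_ss; rewrite Ess.
have ssV : forall x, x \in w :: s' -> (x \in V) && Q x by move=> x; rewrite -Ess mem_ss.
pose tp := last w s'.
have tpss : tp \in w :: s' by exact: mem_last.
have /andP [tpV Qtp] := ssV tp tpss.
pose k := tp - c tp.
have k0 : 0 <= k by rewrite subr_ge0; apply: Hc.
have Hb : forall x, x \in belast w s' -> c x < x.
  move=> x xb; have xlt := path_belast_lt pws _ xb.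
  have /andP [xV /andP [mx _]] := ssV x (mem_belast xb).
  move: Qtp => /andP [_ /allP /(_ x xV)]; rewrite mx xlt /=; exact.
have [Hpos Hzero Hsum] := @icd_prop R c k s' w pws Hb (erefl k).
rewrite Ess in mem_ss sum_ss.
set f := icdf c k (w :: s') in Hpos Hzero Hsum.
have fge0 : forall x, 0 <= f x.
  by move=> x; case: (boolP (x \in w :: s')) => xin; [exact: ltW (Hpos x xin)|rewrite Hzero].
pose Z := \sum_(v <- w :: s') f v.
have Zpos : 0 < Z.
  rewrite /Z big_cons; apply: ltr_wpDr; last exact: Hpos (mem_head _ _).
  by apply: sumr_ge0 => v _.
pose nu := fun x => f x / Z.
have nu0 : forall x, x \notin w :: s' -> nu x = 0 by move=> x xn; rewrite /nu Hzero // mul0r.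
have nuge0 : forall x, 0 <= nu x by move=> x; apply: divr_ge0 => //; exact: ltW.
have nupos : forall x, x \in w :: s' -> 0 < nu x by move=> x xin; apply: divr_gt0; [exact: Hpos|].
have sumnu : \sum_(v <- V) nu v = 1.
  by rewrite (sum_ss nu nu0) /nu -mulr_suml divff // (gt_eqF Zpos).
have Pf_ss : forall p, Pf V c nu p = \sum_(v <- w :: s' | p <= v) (p - c v) * nu v.
  move=> p; rewrite /Pf big_mkcond (sum_ss (fun v => if p <= v then (p - c v) * nu v else 0)).
    by rewrite -big_mkcond.
  by move=> x xn; rewrite nu0 // mulr0; case: ifP.
pose K := k / Z.
have PfK : forall x, x \in w :: s' -> Pf V c nu x = K.
  move=> x xin; rewrite Pf_ss /K -(Hsum x xin) mulr_suml; apply: eq_bigr => v _.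
  by rewrite /nu mulrA.
have HS : forall u, u \in V -> 0 < m u -> Pf V c nu u = K.
  move=> u uV mu; case: (boolP (u \in w :: s')) => [uin|unin]; first exact: PfK.
  have nQu : ~~ Q u by move: unin; rewrite mem_ss uV.
  move: nQu; rewrite /Q mu /= => /allPn [x xV]; rewrite negb_imply => /andP [/andP [mx xu] ncx].
  have hz : has (fun y => (0 < m y) && ~~ (c y < y)) V by apply/hasP; exists x; rewrite ?mx.
  have [z0 [z0V /andP [mz0 nz0] Hz0]] := @argmin_pred R R _ (fun y : R => y) _ hz.
  have Qz0 : Q z0.
    rewrite /Q mz0 /=; apply/allP => y yV; apply/implyP => /andP [my ly].
    apply: contraT => ncy; have := Hz0 y yV; rewrite my ncy => /(_ isT).
    by rewrite leNgt ly.
  have z0in : z0 \in w :: s' by rewrite mem_ss z0V Qz0.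
  have z0le : z0 <= tp := @path_le_last R w s' pws _ z0in.
  have z0eq : z0 = tp.
    apply/le_anti; rewrite z0le /= leNgt; apply/negP => lt.
    move: Qtp => /andP [_ /allP /(_ z0 z0V)]; rewrite mz0 lt /= => h.
    by rewrite h in nz0.
  have k_0 : k = 0.
    rewrite /k -z0eq; have h1 : z0 <= c z0 by rewrite leNgt.
    have h2 := Hc z0 z0V; lra.
  rewrite /K k_0 mul0r /Pf big_seq_cond; apply: big1 => v /andP [vV uv].
  rewrite nu0 ?mulr0 //; apply/negP => vin; have /andP [_ Qv] := ssV v vin.
  move: Qv => /andP [_ /allP /(_ x xV)]; rewrite mx (lt_le_trans xu uv) /= => h.
  by rewrite h in ncx.
have nuin : forall x, 0 < nu x -> x \in w :: s'.
  by move=> x nx; apply: contraT => xn; rewrite nu0 // ltxx in nx.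
have Hnu_opt : forall p, Pf V c nu p <= K.
  move=> p; rewrite -(PfK w (mem_head _ _)); apply: (Pf_opt V c nu w nuge0 Hc) => y yV ny.
  by rewrite (PfK y (nuin y ny)) (PfK w (mem_head _ _)).
have ICD : is_ICD V c nu.
  split; first split; first exact: nuge0.
    split => //; move=> v vn; apply: nu0; apply/negP => vin.
    by have /andP [vV _] := ssV v vin; rewrite vV in vn.
  exists K; split; first by apply: divr_ge0 => //; exact: ltW.
  move=> p /andP [pV np]; rewrite profitE //; exact: PfK (nuin p np).
have [x0 [x0in _ Hx0]] := @argmin_pred R R predT (fun x => m x / nu x) (w :: s') isT.
have /andP [x0V /andP [mx0 _]] := ssV x0 x0in.
pose t := m x0 / nu x0.
have tpos : 0 < t by apply: divr_gt0 => //; exact: nupos.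
have m'ge0 : forall v, 0 <= m v - t * nu v.
  move=> v; rewrite subr_ge0; case: (boolP (v \in w :: s')) => vin.
    by rewrite -ler_pdivlMr ?nupos //; apply: Hx0.
  by rewrite nu0 // mulr0.
have m'le : forall v, 0 < m v - t * nu v -> 0 < m v.
  move=> v h; apply: (lt_le_trans h); rewrite lerBlDr lerDl; apply: mulr_ge0 => //.
  exact: ltW.
exists nu, t; split => //.
  apply: (@count_lt_in _ _ _ V x0) => //.
    by move=> y _; exact: m'le.
  by rewrite /t divfK ?subrr ?ltxx // gt_eqF // nupos.
have [ps [psV mps Hps]] := @argmin_pred R R _ (fun x => - Pf V c m x) _ Hhas.
have Km : Pf V c nu ps = K by exact: HS.
have Hm'opt : forall p, Pf V c (fun v => m v - t * nu v) p <=
                         Pf V c (fun v => m v - t * nu v) ps.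
  apply: (Pf_opt V c _ ps m'ge0 Hc) => y yV my'.
  have my := m'le y my'.
  rewrite !Pf_lin (HS y yV my) Km; have := Hps y yV my; rewrite lerN2 => h.
  by rewrite lerD2r.
move=> p /(sigma_starE V c m p Hm) Hp.
have A := Hp ps.
have e : forall x, Pf V c m x = Pf V c (fun v => m v - t * nu v) x + t * Pf V c nu x.
  by move=> x; rewrite Pf_lin subrK.
have B := Hnu_opt p.
have C := Hm'opt p.
rewrite !e Km in A.
have D : t * K <= t * Pf V c nu p by lra.
rewrite ler_pM2l // in D.
have E : t * Pf V c nu p <= t * K by rewrite ler_pM2l.
split; apply/sigma_starE => // p'.
  exact: le_trans (Hnu_opt p') D.
have := Hm'opt p'; lra.
Qed.

Lemma main_ind {R : realType} (V : seq R) (c : R -> R) :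
  uniq V -> (forall v, v \in V -> c v <= v) ->
  forall n (m : R -> R), (forall v, 0 <= m v) -> (forall v, v \notin V -> m v = 0) ->
  (count (fun v => (0 < m v)%R) V <= n)%N ->
  exists (J : nat) (q : 'I_J -> R) (nu : 'I_J -> R -> R),
    (forall j, 0 <= q j) /\ \sum_(j < J) q j = \sum_(v <- V) m v /\
    (forall j, is_ICD V c (nu j)) /\
    (forall v, \sum_(j < J) q j * nu j v = m v) /\
    (forall j p, sigma_star V c m p -> sigma_star V c (nu j) p).
Proof.
move=> HV Hc n; elim: n => [|n IH] m Hm H0 Hcnt.
  have mz : forall v, m v = 0.
    move=> v; case: (boolP (v \in V)) => vV; last exact: H0.
    apply: (nonpos0 Hm); apply/negP => mv.
    have : has (fun v => 0 < m v) V by apply/hasP; exists v.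
    by rewrite has_count; move: Hcnt; rewrite leqn0 => /eqP ->.
  exists 0%N, (fun _ => 0), (fun _ _ => 0).
  split; first by case.
  split; first by rewrite big_ord0 big1.
  split; first by case.
  split; first by move=> v; rewrite big_ord0 mz.
  by case.
case: (boolP (has (fun v => 0 < m v) V)) => Hhas; last first.
  apply: (IH m Hm H0); move: Hhas; rewrite has_count -leqNgt leqn0 => /eqP ->.
  by [].
have [nu [t [tpos ICD m'ge0 Hcount Hopt]]] := step V c m HV Hc Hm H0 Hhas.
have H0' : forall v, v \notin V -> m v - t * nu v = 0.
  move=> v vn; rewrite H0 //; case: ICD => [[_ [nu0 _]] _]; by rewrite nu0 // mulr0 subrr.
have Hcnt' : (count (fun v => (0 < m v - t * nu v)%R) V <= n)%N.
  by rewrite -ltnS; apply: leq_trans Hcount Hcnt.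
have [J [q [nus [Hq [Hsq [HI [Hdec Hop]]]]]]] := IH _ m'ge0 H0' Hcnt'.
exists J.+1, (fun j => if unlift ord0 j is Some j' then q j' else t),
  (fun j => if unlift ord0 j is Some j' then nus j' else nu).
have sum1 : \sum_(v <- V) nu v = 1 by case: ICD => [[_ [_ ->]] _].
split.
  move=> j; case: (unliftP ord0 j) => [j' _|_]; [exact: Hq|exact: ltW].
split.
  rewrite big_ord_recl unlift_none.
  under eq_bigr do rewrite liftK.
  rewrite Hsq sumrB -mulr_sumr sum1 mulr1; ring.
split.
  by move=> j; case: (unliftP ord0 j) => [j' _|_].
split.
  move=> v; rewrite big_ord_recl unlift_none.
  under eq_bigr do rewrite liftK.
  rewrite Hdec; ring.
move=> j p Hp; have [Hp1 Hp2] := Hopt p Hp.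
by case: (unliftP ord0 j) => [j' _|_] //; apply: Hop.
Qed.

Theorem lemmaD1 (R : realType) (V : seq R) (mu : R -> R) (c : R -> R) :
  uniq V ->
  is_dist_on V mu ->
  (forall v, v \in V -> 0 < mu v) ->
  (forall v, v \in V -> c v <= v) ->
  exists (J : nat) (q : 'I_J -> R) (nu : 'I_J -> R -> R),
    (forall j, 0 <= q j) /\ \sum_(j < J) q j = 1 /\
    (forall j, is_ICD V c (nu j)) /\
    (forall v, \sum_(j < J) q j * nu j v = mu v) /\
    (forall j p, sigma_star V c mu p -> sigma_star V c (nu j) p).
Proof.
move=> HV [Hm [H0 H1]] _ Hc.
have [J [q [nu [Hq [Hs rest]]]]] := main_ind V c HV Hc _ mu Hm H0 (leqnn _).
by exists J, q, nu; rewrite Hs H1.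
Qed.
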